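(* Let $m\ge0$ be an integer. Every $f\in LC(O,K)$ can be expanded uniquely as $$f(x)=\sum_{n=0}^\infty\beta_n^{(m)}\,\mathcal{D}_n(x)^{q^m}\qquad(x\in O),$$ with $\beta_n^{(m)}\in K$, $\beta_n^{(m)}\to0$, where the coefficients are given by $$\beta_n^{(m)}=\big((\Delta-[m]I)^nf\big)(1)=\sum_{i=0}^n\sum_{j=i}^n(-1)^{n-i}\binom{n}{j}[m]^{n-j}f(T^i)\,\mathcal{D}_i(T^j).$$
   Context: Let $q$ be a prime power, $K=\mathbf{F}_q((T))$, $O=\mathbf{F}_q[[T]]$, with $T$-adic absolute value, and $LC(O,K)$ the $K$-Banach space (sup-norm) of continuous $\mathbf{F}_q$-linear functions $O\to K$. Put $[m]=T^{q^m}-T$ (so $[0]=0$). Hasse derivatives: $\mathcal{D}_n(\sum_ia_iT^i)=\sum_i\binom{i}{n}a_iT^{i-n}$ (binomials in $\mathbf{F}_q$). The Carlitz difference operator $\Delta$ on $LC(O,K)$ is $(\Delta f)(x)=f(Tx)-Tf(x)$, and $I$ is the identity operator; binomial coefficients $\binom{n}{j}$ are read in $\mathbf{F}_q$. *)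

(* Defs.v *)
(* K = F_q((T)) as lower-bounded coefficient families
   int -> F_q; O = F_q[[T]] as coefficient sequences nat -> F_q. *)
From HB Require Import structures.
From mathcomp Require Import all_boot all_order all_algebra zify.
From Stdlib Require Import ClassicalEpsilon.
Set Implicit Arguments. Unset Strict Implicit. Unset Printing Implicit Defensive.
Import Order.TTheory GRing.Theory Num.Theory.
Local Open Scope ring_scope.

Section Laurent.
Variable F : finFieldType.   (* F = F_q, q := #|F| *)

Definition lbounded (c : int -> F) :=
  exists N : int, forall i : int, i < N -> c i = 0.

Definition laurent := {c : int -> F | lbounded c}.

Definition coef (x : laurent) : int -> F := proj1_sig x.

Definition lb (x : laurent) : int :=
  proj1_sig (constructive_indefinite_description
    (fun N : int => forall i : int, i < N -> proj1_sig x i = 0) (proj2_sig x)).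

Lemma lbP (x : laurent) (i : int) : i < lb x -> coef x i = 0.
Proof.
rewrite /lb; case: constructive_indefinite_description => /= N HN; exact: HN.
Qed.

Definition kmk (c : int -> F) (N : int) (H : forall i : int, i < N -> c i = 0)
  : laurent := exist _ c (ex_intro _ N H).

Lemma kzero_subproof (i : int) : i < 0 -> (fun _ : int => 0 : F) i = 0.
Proof. by []. Qed.
Definition kzero : laurent := kmk kzero_subproof.

Lemma kone_subproof (i : int) : i < 0 -> (fun k : int => ((k == 0) %:R : F)) i = 0.
Proof. by move=> h; rewrite /= lt_eqF. Qed.
Definition kone : laurent := kmk kone_subproof.

Lemma kT_subproof (i : int) : i < 1 -> (fun k : int => ((k == 1) %:R : F)) i = 0.
Proof. by move=> h; rewrite /= lt_eqF. Qed.
Definition kT : laurent := kmk kT_subproof.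

Lemma kadd_subproof (x y : laurent) (i : int) : i < Num.min (lb x) (lb y) ->
  (fun k => coef x k + coef y k) i = 0.
Proof.
rewrite /= lt_min => /andP[hx hy]; by rewrite !lbP // addr0.
Qed.
Definition kadd (x y : laurent) : laurent := kmk (@kadd_subproof x y).

Lemma kopp_subproof (x : laurent) (i : int) : i < lb x -> (fun k => - coef x k) i = 0.
Proof. by move=> h; rewrite /= lbP // oppr0. Qed.
Definition kopp (x : laurent) : laurent := kmk (@kopp_subproof x).

Lemma kscale_subproof (a : F) (x : laurent) (i : int) : i < lb x ->
  (fun k => a * coef x k) i = 0.
Proof. by move=> h; rewrite /= lbP // mulr0. Qed.
Definition kscale (a : F) (x : laurent) : laurent := kmk (@kscale_subproof a x).

(* Cauchy product: (xy)_k = sum_{lb x <= i <= k - lb y} x_i y_(k-i) *)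
Definition kmul_coef (x y : laurent) (k : int) : F :=
  \sum_(d < (absz (k - lb x - lb y)%R).+1)
     coef x (lb x + (d : nat)%:Z) * coef y (k - lb x - (d : nat)%:Z).

Lemma kmul_subproof (x y : laurent) (i : int) : i < lb x + lb y ->
  kmul_coef x y i = 0.
Proof.
move=> h; rewrite /kmul_coef big1 // => d _.
rewrite (@lbP y) ?mulr0 //; lia.
Qed.
Definition kmul (x y : laurent) : laurent := kmk (@kmul_subproof x y).

Definition kexp (x : laurent) (n : nat) : laurent := iter n (kmul x) kone.

Definition PS := nat -> F.

Definition ps_add (x y : PS) : PS := fun i => x i + y i.
Definition ps_scale (a : F) (x : PS) : PS := fun i => a * x i.
Definition psT (x : PS) : PS := fun i => if i is i'.+1 then x i' else 0.
Definition psX (j : nat) : PS := fun i => (i == j)%:R.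

Lemma ofPS_subproof (c : PS) (i : int) : i < 0 ->
  (fun k : int => match k with Posz n => c n | Negz _ => 0 end) i = 0.
Proof. by case: i. Qed.
Definition ofPS (c : PS) : laurent := kmk (@ofPS_subproof c).

(* Hasse derivative D_n (sum a_i T^i) = sum_i binom(i,n) a_i T^(i-n),
   binomials read in F; coefficient of T^i in D_n x is binom(i+n,n) a_(i+n) *)
Definition hasse (n : nat) (x : PS) : PS := fun i => ('C(i + n, n))%:R * x (i + n)%N.

Definition Flinear (f : PS -> laurent) :=
  (forall x y, f (ps_add x y) = kadd (f x) (f y)) /\
  (forall (a : F) x, f (ps_scale a x) = kscale a (f x)).

(* continuity for the T-adic topologies on O and K *)
Definition Tcontinuous (f : PS -> laurent) :=
  forall (x : PS) (M : int), exists N : nat, forall y : PS,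
    (forall i, (i < N)%N -> y i = x i) ->
    forall k : int, k < M -> coef (f y) k = coef (f x) k.

Definition LC (f : PS -> laurent) := Flinear f /\ Tcontinuous f.

Definition bracket (m : nat) : laurent := kadd (kexp kT (#|F| ^ m)) (kopp kT).

Definition Delta (g : PS -> laurent) : PS -> laurent :=
  fun x => kadd (g (psT x)) (kopp (kmul kT (g x))).

Definition DeltaMinus (m : nat) (g : PS -> laurent) : PS -> laurent :=
  fun x => kadd (Delta g x) (kopp (kmul (bracket m) (g x))).

Definition ktends0 (b : nat -> laurent) :=
  forall M : int, exists N : nat, forall n, (N <= n)%N ->
    forall k : int, k < M -> coef (b n) k = 0.

Definition kpartial (s : nat -> laurent) (n : nat) : laurent :=
  \big[kadd/kzero]_(i < n) s i.

Definition kseries (s : nat -> laurent) (l : laurent) :=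
  ktends0 (fun n => kadd (kpartial s n) (kopp l)).

End Laurent.

(* Main.v *)
Require Import Defs.
From HB Require Import structures.
From mathcomp Require Import all_boot all_order all_algebra zify.
From mathcomp Require Import finfield.
From mathcomp Require Import boolp.
From mathcomp Require Import ring.
Set Implicit Arguments. Unset Strict Implicit. Unset Printing Implicit Defensive.
Import Order.TTheory GRing.Theory Num.Theory.
Local Open Scope ring_scope.

Section Ring.
Variable F : finFieldType.
Local Notation K := (laurent F).

Lemma keq (x y : K) : (forall k, coef x k = coef y k) -> x = y.
Proof.
case: x y => [c Hc] [d Hd] /= H.
have E : c = d by apply: funext.
subst d; congr exist; exact: Prop_irrelevance.
Qed.

Definition vge (x : K) (M : int) := forall k : int, k < M -> coef x k = 0.

Lemma vge_lb (x : K) : vge x (lb x).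
Proof. move=> k; exact: lbP. Qed.

Lemma vge_le (x : K) M M' : vge x M -> M' <= M -> vge x M'.
Proof. move=> H le k kM; apply: H; lia. Qed.

Lemma coef_kadd (x y : K) k : coef (kadd x y) k = coef x k + coef y k.
Proof. by []. Qed.
Lemma coef_kopp (x : K) k : coef (kopp x) k = - coef x k.
Proof. by []. Qed.
Lemma coef_kzero k : coef (kzero F) k = 0.
Proof. by []. Qed.
Lemma coef_kone k : coef (kone F) k = (k == 0)%:R.
Proof. by []. Qed.
Lemma coef_kT k : coef (kT F) k = (k == 1)%:R.
Proof. by []. Qed.
Lemma coef_kscale a (x : K) k : coef (kscale a x) k = a * coef x k.
Proof. by []. Qed.
Lemma coef_kmul_def (x y : K) k : coef (kmul x y) k = kmul_coef x y k.
Proof. by []. Qed.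

Section W.
Variables (x y : K) (k : int).
Definition W (A : int) (n : nat) :=
  \sum_(d < n) coef x (A + d%:Z) * coef y (k - A - d%:Z).

Lemma W_shiftA A n : coef x (A - 1) = 0 -> W (A - 1) n.+1 = W A n.
Proof.
move=> hx; rewrite /W big_ord_recl /= addr0 hx mul0r add0r.
apply: eq_bigr => d _; rewrite /bump /=.
have -> : A - 1 + (1 + d)%N%:Z = A + d%:Z by lia.
by have -> : k - (A - 1) - (1 + d)%N%:Z = k - A - d%:Z by lia.
Qed.

Lemma W_ext A n : coef y (k - A - n%:Z) = 0 -> W A n.+1 = W A n.
Proof. by move=> hy; rewrite /W big_ord_recr /= hy mulr0 addr0. Qed.

Definition nAC (A C : int) : nat := absz (k - A - C)%R.

Lemma W_valid_shift A C (i j : nat) : vge x A -> vge y C -> A + C <= k ->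
  W (A - i%:Z) (nAC (A - i%:Z) (C - j%:Z)).+1 = W A (nAC A C).+1.
Proof.
move=> hx hy hk; elim: j => [|j IH].
  elim: i => [|i IH]; first by rewrite !subr0.
  rewrite -IH.
  have -> : A - i.+1%:Z = (A - i%:Z) - 1 by lia.
  have -> : nAC (A - i%:Z - 1) (C - 0%:Z) = (nAC (A - i%:Z) (C - 0%:Z)).+1.
    rewrite /nAC; lia.
  by rewrite W_shiftA // hx //; lia.
rewrite -IH.
have -> : nAC (A - i%:Z) (C - j.+1%:Z) = (nAC (A - i%:Z) (C - j%:Z)).+1.
  rewrite /nAC; lia.
rewrite W_ext // hy //; rewrite /nAC; lia.
Qed.

Lemma W_valid A C a b : vge x A -> vge y C -> A + C <= k ->
  vge x a -> vge y b -> a + b <= k ->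
  W A (nAC A C).+1 = W a (nAC a b).+1.
Proof.
move=> hx hy hk hx' hy' hk'.
pose A0 := Num.min A a; pose C0 := Num.min C b.
have e1 : A0 = A - (absz (A - A0)%R)%:Z by rewrite /A0; lia.
have e2 : C0 = C - (absz (C - C0)%R)%:Z by rewrite /C0; lia.
have e3 : A0 = a - (absz (a - A0)%R)%:Z by rewrite /A0; lia.
have e4 : C0 = b - (absz (b - C0)%R)%:Z by rewrite /C0; lia.
rewrite -(W_valid_shift (absz (A - A0)) (absz (C - C0)) hx hy hk) -e1 -e2.
by rewrite -(W_valid_shift (absz (a - A0)) (absz (b - C0)) hx' hy' hk') -e3 -e4.
Qed.

Lemma W_zero A n : vge x A -> k < lb x + lb y -> W A n = 0.
Proof.
move=> hx hk; rewrite /W big1 // => d _.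
case: (ltP (A + d%:Z) (lb x)) => h; first by rewrite lbP ?mul0r.
by rewrite (@lbP _ y) ?mulr0 //; lia.
Qed.

Lemma kmul_W A C : vge x A -> vge y C -> A + C <= k ->
  coef (kmul x y) k = W A (nAC A C).+1.
Proof.
move=> hx hy hk; case: (ltP k (lb x + lb y)) => h.
  by rewrite coef_kmul_def kmul_subproof // W_zero.
rewrite (W_valid hx hy hk (@vge_lb x) (@vge_lb y) h).
by rewrite coef_kmul_def /kmul_coef /W /nAC.
Qed.
End W.

Lemma vge_kmul (x y : K) A C : vge x A -> vge y C -> vge (kmul x y) (A + C).
Proof.
move=> hx hy k hk; case: (ltP k (lb x + lb y)) => h.
  by rewrite coef_kmul_def kmul_subproof.
rewrite (kmul_W (@vge_lb x) (@vge_lb y) h) /W big1 // => d _.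
case: (ltP (lb x + d%:Z) A) => h1; first by rewrite hx ?mul0r.
by rewrite hy ?mulr0 //; lia.
Qed.

Definition P (x : K) (A : int) (B : nat) : {poly F} := \poly_(i < B) coef x (A + i%:Z).

Lemma kmulP (x y : K) A C (n B : nat) : vge x A -> vge y C -> (n < B)%N ->
  coef (kmul x y) (A + C + n%:Z) = (P x A B * P y C B)`_n.
Proof.
move=> hx hy hB; have hk : A + C <= A + C + n%:Z by lia.
rewrite (kmul_W hx hy hk) coefM /W /nAC.
have -> : absz (A + C + n%:Z - A - C)%R = n by lia.
apply: eq_bigr => [[d hd]] _ /=.
rewrite /P !coef_poly.
have -> : (d < B)%N by lia.
have -> : (n - d < B)%N by lia.
by have -> : A + C + n%:Z - A - d%:Z = C + (n - d)%N%:Z by lia.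
Qed.

Lemma PkmulE (x y : K) A C (B d : nat) : vge x A -> vge y C -> (d < B)%N ->
  (P (kmul x y) (A + C) B)`_d = (P x A B * P y C B)`_d.
Proof.
move=> hx hy hd; rewrite /P coef_poly hd.
by rewrite -(kmulP hx hy hd).
Qed.

Lemma keq_from (u v : K) L : vge u L -> vge v L ->
  (forall n : nat, coef u (L + n%:Z) = coef v (L + n%:Z)) -> u = v.
Proof.
move=> hu hv H; apply: keq => k; case: (ltP k L) => h.
  by rewrite hu ?hv.
by have -> : k = L + (absz (k - L)%R)%:Z by lia.
Qed.

Lemma vge_kadd (x y : K) M : vge x M -> vge y M -> vge (kadd x y) M.
Proof. by move=> hx hy k hk; rewrite coef_kadd hx ?hy ?addr0. Qed.
Lemma vge_kopp (x : K) M : vge x M -> vge (kopp x) M.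
Proof. by move=> hx k hk; rewrite coef_kopp hx ?oppr0. Qed.
Lemma vge_kone : vge (kone F) 0.
Proof. by move=> k hk; rewrite coef_kone; case: k hk. Qed.

Lemma kaddA : associative (@kadd F).
Proof. by move=> x y z; apply: keq => k; rewrite !coef_kadd addrA. Qed.
Lemma kaddC : commutative (@kadd F).
Proof. by move=> x y; apply: keq => k; rewrite !coef_kadd addrC. Qed.
Lemma kadd0 : left_id (kzero F) (@kadd F).
Proof. by move=> x; apply: keq => k; rewrite !coef_kadd add0r. Qed.
Lemma kaddN : left_inverse (kzero F) (@kopp F) (@kadd F).
Proof. by move=> x; apply: keq => k; rewrite !coef_kadd coef_kopp addNr. Qed.

Lemma kmulA : associative (@kmul F).
Proof.
move=> x y z; set a := lb x; set b := lb y; set c := lb z.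
have hx := @vge_lb x; have hy := @vge_lb y; have hz := @vge_lb z.
apply: (keq_from (L := a + b + c)).
- have -> : a + b + c = a + (b + c) by rewrite addrA.
  by apply: vge_kmul => //; apply: vge_kmul.
- by apply: vge_kmul => //; apply: vge_kmul.
move=> n; symmetry.
rewrite (kmulP (B:=n.+1) (vge_kmul hx hy) hz) //.
have -> : a + b + c + n%:Z = a + (b + c) + n%:Z by rewrite addrA.
rewrite (kmulP (B:=n.+1) hx (vge_kmul hy hz)) //.
rewrite coefM [in RHS]coefM.
rewrite (eq_bigr (fun d : 'I_n.+1 => (P x a n.+1 * P y b n.+1)`_d * (P z c n.+1)`_(n - d))); last first.
  by move=> [d hd] _ /=; rewrite (PkmulE hx hy).
rewrite [in RHS](eq_bigr (fun d : 'I_n.+1 => (P x a n.+1)`_d * (P y b n.+1 * P z c n.+1)`_(n - d))); last first.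
  by move=> [d hd] _ /=; rewrite (PkmulE hy hz) //; lia.
by rewrite -coefM -coefM mulrA.
Qed.



Lemma kmulC : commutative (@kmul F).
Proof.
move=> x y; have hx := @vge_lb x; have hy := @vge_lb y.
apply: (keq_from (L := lb x + lb y)); first exact: vge_kmul.
  by rewrite addrC; apply: vge_kmul.
move=> n; rewrite (kmulP (B:=n.+1) hx hy) //.
by rewrite [lb x + _]addrC (kmulP (B:=n.+1) hy hx) // mulrC.
Qed.

Lemma P_kone B : (0 < B)%N -> P (kone F) 0 B = 1.
Proof.
move=> hB; apply/polyP => i; rewrite /P coef_poly coef1 coef_kone add0r.
case: ifP => h; first by [].
by case: i h => //; rewrite hB.
Qed.

Lemma kmul1 : left_id (kone F) (@kmul F).
Proof.
move=> x; have hx := @vge_lb x.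
apply: (keq_from (L := 0 + lb x)); first exact: vge_kmul vge_kone hx.
  by rewrite add0r.
move=> n; rewrite (kmulP (B:=n.+1) vge_kone hx) // P_kone // mul1r.
by rewrite /P coef_poly ltnSn add0r.
Qed.

Lemma P_kadd (x y : K) A B : P (kadd x y) A B = P x A B + P y A B.
Proof.
by apply/polyP => i; rewrite coefD /P !coef_poly; case: ifP; rewrite ?addr0.
Qed.

Lemma kmulDl : left_distributive (@kmul F) (@kadd F).
Proof.
move=> x y z; set A := Num.min (lb x) (lb y).
have hx : vge x A by apply: (vge_le (@vge_lb x)); rewrite /A; lia.
have hy : vge y A by apply: (vge_le (@vge_lb y)); rewrite /A; lia.
have hz := @vge_lb z.
have hxy : vge (kadd x y) A by apply: vge_kadd.
apply: (keq_from (L := A + lb z)); first exact: vge_kmul.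
  by apply: vge_kadd; apply: vge_kmul.
move=> n; rewrite (kmulP (B:=n.+1) hxy hz) // coef_kadd.
by rewrite (kmulP (B:=n.+1) hx hz) // (kmulP (B:=n.+1) hy hz) // P_kadd mulrDl coefD.
Qed.

HB.instance Definition _ := gen_eqMixin K.
HB.instance Definition _ := gen_choiceMixin K.
HB.instance Definition _ := GRing.isZmodule.Build K kaddA kaddC kadd0 kaddN.

Lemma kone_neq0 : kone F != 0.
Proof.
apply/eqP => h; have := congr1 (fun u => coef u 0) h.
rewrite coef_kone => /eqP; rewrite eqxx oner_eq0.
by [].
Qed.

HB.instance Definition _ := GRing.Zmodule_isComNzRing.Build K kmulA kmulC kmul1 kmulDl kone_neq0.

Lemma kaddE (x y : K) : kadd x y = x + y. Proof. by []. Qed.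
Lemma kmulE (x y : K) : kmul x y = x * y. Proof. by []. Qed.
Lemma koppE (x : K) : kopp x = - x. Proof. by []. Qed.
Lemma kzeroE : kzero F = 0. Proof. by []. Qed.
Lemma koneE : kone F = 1. Proof. by []. Qed.
Lemma kexpE (x : K) n : kexp x n = x ^+ n.
Proof. by elim: n => [|n IH] //; rewrite exprS -IH. Qed.


Definition kc (a : F) : K := kscale a 1.

Lemma coef_kc a k : coef (kc a) k = a * (k == 0)%:R.
Proof. by []. Qed.

Lemma coef_kcM a (x : K) k : coef (kc a * x) k = a * coef x k.
Proof.
have hx := @vge_lb x.
have hc : vge (kc a) 0 by move=> l hl; rewrite coef_kc; case: l hl => // ?; rewrite mulr0.
case: (ltP k (0 + lb x)) => h.
  by rewrite (vge_kmul hc hx) // hx ?mulr0 //; lia.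
have -> : k = 0 + lb x + (absz (k - (0 + lb x))%R)%:Z by lia.
rewrite (kmulP (B := (absz (k - (0 + lb x))%R).+1) hc hx) //.
have -> : P (kc a) 0 (absz (k - (0 + lb x))%R).+1 = a%:P.
  apply/polyP => i; rewrite /P coef_poly coefC coef_kc add0r.
  by case: i => [|i] //=; rewrite ?mulr1 ?mulr0 ?if_same.
by rewrite coefCM /P coef_poly ltnSn add0r.
Qed.

Lemma kscaleE a (x : K) : kscale a x = kc a * x.
Proof. by apply: keq => k; rewrite coef_kcM. Qed.

Lemma kcD a b : kc (a + b) = kc a + kc b.
Proof. by apply: keq => k; rewrite coef_kadd !coef_kc mulrDl. Qed.
Lemma kcM a b : kc (a * b) = kc a * kc b.
Proof. by apply: keq => k; rewrite coef_kcM !coef_kc mulrA. Qed.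
Lemma kc1 : kc 1 = 1.
Proof. by apply: keq => k; rewrite coef_kc mul1r. Qed.
Lemma kcN a : kc (- a) = - kc a.
Proof. by apply: keq => k; rewrite coef_kopp !coef_kc mulNr. Qed.
Lemma kcX a n : kc (a ^+ n) = kc a ^+ n.
Proof. by elim: n => [|n IH]; rewrite ?kc1 // !exprS kcM IH. Qed.
Lemma kc_nat n : kc n%:R = n%:R.
Proof. by elim: n => [|n IH]; [apply: keq => k; rewrite coef_kc mul0r | rewrite !mulrS kcD kc1 IH]. Qed.

Lemma coef_natmul (x : K) n k : coef (x *+ n) k = coef x k *+ n.
Proof. by elim: n => [|n IH] //; rewrite !mulrS coef_kadd IH. Qed.

Lemma pchar_K p : p \in [pchar F] -> p \in [pchar K].
Proof.
move=> hp; rewrite inE (pcharf_prime hp) /=; apply/eqP; apply: keq => k.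
by rewrite coef_natmul (mulrn_pchar hp).
Qed.

Definition qm (m : nat) := (#|F| ^ m)%N.

Lemma frobD m (x y : K) : (x + y) ^+ qm m = x ^+ qm m + y ^+ qm m.
Proof.
have [p pr hp] := finPcharP F.
apply: exprDn_pchar.
rewrite (eq_pnat _ (pcharf_eq (pchar_K hp))) /qm pnatX.
have E : #|F| = (p ^ logn p #|F|)%N := card_pprimeChar hp.
by rewrite E pnatX pnat_id.
Qed.

Lemma expf_qm m (a : F) : a ^+ qm m = a.
Proof.
rewrite /qm; elim: m => [|m IH]; first by rewrite expr1.
by rewrite expnSr exprM IH expf_card.
Qed.

Lemma kc_qm m a : kc a ^+ qm m = kc a.
Proof. by rewrite -kcX expf_qm. Qed.

Lemma qm_gt0 m : (0 < qm m)%N.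
Proof. by rewrite /qm expn_gt0 (ltnW (finNzRing_gt1 F)). Qed.

Local Notation T := (kT F).

Lemma vge_kT : vge T 1.
Proof. by move=> k hk; rewrite coef_kT; have -> : (k == 1) = false by lia. Qed.

Lemma coef_kTM (y : K) l : coef (T * y) l = coef y (l - 1).
Proof.
have hy := @vge_lb y.
case: (ltP l (1 + lb y)) => h.
  by rewrite (vge_kmul vge_kT hy) // hy //; lia.
have -> : l = 1 + lb y + (absz (l - (1 + lb y))%R)%:Z by lia.
rewrite (kmulP (B := (absz (l - (1 + lb y))%R).+1) vge_kT hy) //.
have -> : P T 1 (absz (l - (1 + lb y))%R).+1 = 1.
  apply/polyP => i; rewrite /P coef_poly coef1 coef_kT.
  case: i => [|i] //=.
  by case: ifP => // _; have -> : (1 + i.+1%:Z == 1) = false by lia.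
rewrite mul1r /P coef_poly ltnSn; congr coef; lia.
Qed.

Lemma coef_kTX j k : coef (T ^+ j) k = (k == j%:Z)%:R.
Proof.
elim: j k => [|j IH] k; first by rewrite expr0 -koneE coef_kone.
rewrite exprS coef_kTM IH; congr (_%:R); lia.
Qed.

Lemma vge_kTX j : vge (T ^+ j) j%:Z.
Proof. by move=> k hk; rewrite coef_kTX; have -> : (k == j%:Z) = false by lia. Qed.

Lemma coef_ofPS (c : PS F) (n : nat) : coef (ofPS c) n%:Z = c n.
Proof. by []. Qed.
Lemma vge_ofPS (c : PS F) : vge (ofPS c) 0.
Proof. by move=> [] // n. Qed.

Lemma hasse_psX i j : ofPS (hasse i (psX F j)) =
  if (i <= j)%N then kc ('C(j, i))%:R * T ^+ (j - i) else 0.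
Proof.
apply: keq => k; case: ifP => hij.
  rewrite coef_kcM coef_kTX; case: k => [l|l]; last by rewrite mulr0.
  rewrite coef_ofPS /hasse /psX.
  case: (eqVneq (l + i)%N j) => [<-|ne].
    by rewrite addnK eqxx.
  have -> : (Posz l == (j - i)%N%:Z) = false by lia.
  by rewrite !mulr0.
case: k => [l|l] //; rewrite coef_ofPS /hasse /psX.
have -> : ((l + i)%N == j) = false by lia.
by rewrite mulr0.
Qed.

Lemma vge_mul (x y : K) A C : vge x A -> vge y C -> vge (x * y) (A + C).
Proof. exact: vge_kmul. Qed.

Lemma vge_exp (x : K) A n : vge x A -> vge (x ^+ n) (A * n%:Z).
Proof.
move=> hx; elim: n => [|n IH]; first by rewrite mulr0 expr0; exact: vge_kone.
rewrite exprS; have -> : A * n.+1%:Z = A + A * n%:Z by lia.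
exact: vge_mul.
Qed.

Lemma vge_sum I (r : seq I) (Pr : pred I) (G : I -> K) M :
  (forall i, Pr i -> vge (G i) M) -> vge (\sum_(i <- r | Pr i) G i) M.
Proof.
move=> H; elim/big_rec: _ => [|i y hi hy]; first by move=> k _.
exact: vge_kadd (H i hi) hy.
Qed.

Lemma vge_natmul (x : K) n M : vge x M -> vge (x *+ n) M.
Proof. by move=> hx k hk; rewrite coef_natmul hx // mul0rn. Qed.

Lemma vge_kc a : vge (kc a) 0.
Proof. by move=> l hl; rewrite coef_kc; case: l hl => // ?; rewrite mulr0. Qed.

Lemma vge_opp (x : K) M : vge x M -> vge (- x) M.
Proof. exact: vge_kopp. Qed.
Lemma vge_add (x y : K) M : vge x M -> vge y M -> vge (x + y) M.
Proof. exact: vge_kadd. Qed.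


Definition act (Pp : {poly K}) (h : PS F -> K) (x : PS F) : K :=
  \sum_(i < size Pp) Pp`_i * h (iter i (@psT F) x).

Lemma act_window (Pp : {poly K}) (h : PS F -> K) (x : PS F) N : (size Pp <= N)%N ->
  act Pp h x = \sum_(i < N) Pp`_i * h (iter i (@psT F) x).
Proof.
move=> hN; rewrite /act (big_ord_widen N (fun i => Pp`_i * h (iter i (@psT F) x)) hN).
rewrite big_mkcond /=; apply: eq_bigr => i _; case: ifP => // hi.
by rewrite nth_default ?mul0r // leqNgt hi.
Qed.

Lemma actD (p q : {poly K}) (h : PS F -> K) (x : PS F) : act (p + q) h x = act p h x + act q h x.
Proof.
rewrite (@act_window (p + q) h x (maxn (size p) (size q))) ?size_polyD //.
rewrite (@act_window p h x (maxn (size p) (size q))) ?leq_maxl //.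
rewrite (@act_window q h x (maxn (size p) (size q))) ?leq_maxr //.
by rewrite -big_split; apply: eq_bigr => i _; rewrite coefD mulrDl.
Qed.

Lemma actCM (c : K) (p : {poly K}) (h : PS F -> K) (x : PS F) : act (c%:P * p) h x = c * act p h x.
Proof.
rewrite (@act_window (c%:P * p) h x (size p)); last by rewrite mul_polyC size_scale_leq.
by rewrite /act mulr_sumr; apply: eq_bigr => i _; rewrite coefCM mulrA.
Qed.

Lemma act0 (h : PS F -> K) (x : PS F) : act 0 h x = 0.
Proof. by rewrite /act size_poly0 big_ord0. Qed.

Lemma actMn (p : {poly K}) n (h : PS F -> K) (x : PS F) : act (p *+ n) h x = act p h x *+ n.
Proof. by elim: n => [|n IH]; rewrite ?act0 // !mulrS actD IH. Qed.

Lemma act_sum n (G : nat -> {poly K}) (h : PS F -> K) (x : PS F) :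
  act (\sum_(i < n) G i) h x = \sum_(i < n) act (G i) h x.
Proof.
elim: n => [|n IH]; first by rewrite !big_ord0 act0.
by rewrite !big_ord_recr /= actD IH.
Qed.

Lemma actXn k (h : PS F -> K) (x : PS F) : act ('X^k) h x = h (iter k (@psT F) x).
Proof.
rewrite /act size_polyXn big_ord_recr /= coefXn eqxx mul1r big1 ?add0r //.
move=> [i hi] _ /=; rewrite coefXn.
have -> : (i == k) = false by lia.
by rewrite mul0r.
Qed.

Lemma actX (p : {poly K}) (h : PS F -> K) (x : PS F) : act ('X * p) h x = act p h (@psT F x).
Proof.
rewrite (@act_window ('X * p) h x (size p).+1); last first.
  by apply: leq_trans (size_polyMleq _ _) _; rewrite size_polyX.
rewrite big_ord_recl /= coefXM eqxx mul0r add0r /act.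
by apply: eq_bigr => i _; rewrite coefXM /= add0n -iterSr.
Qed.

Lemma actXC (c : K) (p : {poly K}) (h : PS F -> K) (x : PS F) :
  act (('X + c%:P) * p) h x = act p h (@psT F x) + c * act p h x.
Proof. by rewrite mulrDl actD actX actCM. Qed.

Lemma act_binom (c : K) n (h : PS F -> K) (x : PS F) :
  act (('X + c%:P) ^+ n) h x =
  \sum_(i < n.+1) (c ^+ (n - i) * h (iter i (@psT F) x)) *+ 'C(n, i).
Proof.
rewrite addrC exprDn.
rewrite (big_morph (fun p => act p h x) (fun p q => actD p q h x) (act0 h x)).
apply: eq_bigr => i _.
by rewrite actMn -rmorphXn /= actCM actXn.
Qed.

Lemma iter_psT j : iter j (@psT F) (psX F 0) = psX F j.
Proof.
elim: j => [|j IH] //=; rewrite IH; apply: funext => i.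
by case: i => [|i] //=; rewrite /psX.
Qed.

End Ring.


Section Main.
Variables (F : finFieldType) (m : nat) (f : PS F -> laurent F).
Local Notation K := (laurent F).
Local Notation T := (kT F).
Local Notation t := (T ^+ qm F m).
Local Notation Q := ('X + (- t)%:P : {poly K}).
Local Notation beta := (fun n => iter n (@DeltaMinus F m) f (psX F 0)).

Lemma DeltaMinusE (h : PS F -> K) :
  DeltaMinus m h = fun x => h (psT x) + (- t) * h x.
Proof.
apply: funext => x; rewrite /DeltaMinus /Delta /bracket.
rewrite !kaddE !koppE !kmulE kexpE /qm; ring.
Qed.

Lemma iterD n : iter n (@DeltaMinus F m) f = act (Q ^+ n) f.
Proof.
elim: n => [|n IH].
  by apply: funext => x; rewrite expr0 -(expr0 ('X : {poly K})) actXn.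
rewrite iterS IH DeltaMinusE; apply: funext => x.
by rewrite exprS actXC.
Qed.

Lemma beta_act n : beta n = act (Q ^+ n) f (psX F 0).
Proof. by rewrite /= iterD. Qed.

Lemma beta_expand n :
  beta n = \sum_(i < n.+1) ((- t) ^+ (n - i) * f (psX F i)) *+ 'C(n, i).
Proof.
rewrite /= iterD act_binom; apply: eq_bigr => i _.
by rewrite iter_psT.
Qed.

Lemma f_expand j :
  f (psX F j) = \sum_(i < j.+1) (t ^+ (j - i) * beta i) *+ 'C(j, i).
Proof.
rewrite -iter_psT -actXn.
have -> : ('X : {poly K}) = t%:P + Q by rewrite rmorphN addrCA subrr addr0.
rewrite exprDn.
rewrite (big_morph (fun p => act p f (psX F 0)) (fun p q => actD p q f (psX F 0)) (act0 f (psX F 0))).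
apply: eq_bigr => i _.
by rewrite actMn -rmorphXn /= actCM iterD.
Qed.


Lemma exch_tri n (G : nat -> nat -> K) :
  \sum_(j < n.+1) \sum_(i < j.+1) G i j = \sum_(i < n.+1) \sum_(i <= j < n.+1) G i j.
Proof.
transitivity (\sum_(j < n.+1) \sum_(i < n.+1) (if (i <= j)%N then G i j else 0)).
  by apply: eq_bigr => j _; rewrite (big_ord_widen n.+1 (fun i => G i j)) // big_mkcond.
rewrite exchange_big; apply: eq_bigr => i _.
by rewrite big_geq_mkord [RHS]big_mkcond /=.
Qed.

Lemma big_kaddE I (r : seq I) (Pr : pred I) (G : I -> laurent F) :
  \big[@kadd F/kzero F]_(i <- r | Pr i) G i = \sum_(i <- r | Pr i) G i.
Proof. by []. Qed.

Lemma brE : bracket F m = t - T.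
Proof. by rewrite /bracket kaddE koppE kexpE. Qed.

Lemma beta_formula n :
  beta n =
  \big[@kadd F/kzero F]_(i < n.+1) \big[@kadd F/kzero F]_(i <= j < n.+1)
     kscale ((-1) ^+ (n - i) * ('C(n, j))%:R)
       (kmul (kexp (bracket F m) (n - j))
             (kmul (f (psX F i)) (ofPS (hasse i (psX F j))))).
Proof.
rewrite big_kaddE.
under eq_bigr => i _ do rewrite big_kaddE.
pose G := fun i j : nat => kscale ((-1) ^+ (n - i) * ('C(n, j))%:R)
       (kmul (kexp (bracket F m) (n - j))
             (kmul (f (psX F i)) (ofPS (hasse i (psX F j))))).
rewrite -(exch_tri n G).
rewrite beta_act.

have E : Q = (- bracket F m)%:P + ('X + (- T)%:P).
  rewrite addrCA. rewrite -rmorphD /=. rewrite brE. congr (_ + _%:P). ring.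

rewrite E. 
rewrite exprDn. 
rewrite (big_morph (fun p => act p f (psX F 0)) (fun p q => actD p q f (psX F 0)) (act0 f (psX F 0))).

apply: eq_bigr => [[j hj]] _ /=.

rewrite actMn -rmorphXn /= actCM act_binom mulr_sumr -sumrMnl.

apply: eq_bigr => [[i hi]] _ /=.

rewrite /G iter_psT kscaleE kmulE kmulE kexpE hasse_psX.

have hij : (i <= j)%N := hi.
rewrite hij. rewrite kcM. rewrite kcX kcN kc1. rewrite !kc_nat. 
have e : (n - i = (n - j) + (j - i))%N by rewrite addnBA // subnK.
rewrite e. 
rewrite exprD. rewrite (exprNn (bracket F m)) (exprNn T). rewrite -(mulr_natr _ 'C(n, j)) -(mulr_natr _ 'C(j, i)). 

rewrite -mulr_natr.
set a1 := (-1) ^+ (n - j); set a2 := (-1) ^+ (j - i); set a3 := bracket F m ^+ (n - j).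
set a4 := T ^+ (j - i); set a5 := f (psX F i); set a6 := 'C(j, i)%:R; set a7 := 'C(n, j)%:R.
ring.
Qed.


Lemma kscale0 (y : K) : kscale 0 y = 0.
Proof. by apply: keq => k; rewrite coef_kscale mul0r. Qed.

Lemma kc0 : kc (0 : F) = 0.
Proof. exact: (kc_nat F 0). Qed.

Definition lin (h : PS F -> K) :=
  (forall x y, h (ps_add x y) = h x + h y) /\ (forall a x, h (ps_scale a x) = kc a * h x).

Lemma lin_f : Flinear f -> lin f.
Proof. by case=> h1 h2; split=> *; rewrite ?h1 ?h2 ?kscaleE. Qed.

Lemma lin_zero (h : PS F -> K) : lin h -> h (fun _ => 0) = 0.
Proof.
case=> _ h2; have -> : (fun _ : nat => 0 : F) = ps_scale 0 (fun _ => 0).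
  by apply: funext => i; rewrite /ps_scale mul0r.
by rewrite h2 kc0 mul0r.
Qed.

Definition trunc (N : nat) (x : PS F) : PS F := fun i => if (i < N)%N then x i else 0.
Definition tail (N : nat) (x : PS F) : PS F := fun i => if (i < N)%N then 0 else x i.

Lemma lin_trunc (h : PS F -> K) N (x : PS F) : lin h ->
  h (trunc N x) = \sum_(j < N) kc (x j) * h (psX F j).
Proof.
move=> hl; elim: N => [|N IH].
  rewrite big_ord0 -(lin_zero hl); congr h; apply: funext => i; by [].
have -> : trunc N.+1 x = ps_add (trunc N x) (ps_scale (x N) (psX F N)).
  apply: funext => i; rewrite /trunc /ps_add /ps_scale /psX ltnS leq_eqVlt.
  case: eqP => [->|ne] /=; first by rewrite ltnn mulr1 add0r.
  by rewrite mulr0 addr0.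
case: hl => h1 h2; by rewrite h1 h2 IH big_ord_recr.
Qed.

Lemma split_x N (x : PS F) : x = ps_add (trunc N x) (tail N x).
Proof.
apply: funext => i; rewrite /ps_add /trunc /tail.
by case: ifP; rewrite ?addr0 ?add0r.
Qed.

Definition g n (x : PS F) : K := (ofPS (hasse n x)) ^+ qm F m.

Lemma hasse_add n (x y : PS F) : ofPS (hasse n (ps_add x y)) = ofPS (hasse n x) + ofPS (hasse n y).
Proof.
apply: keq => k; rewrite coef_kadd; case: k => [l|l] /=; last by rewrite addr0.
by rewrite /hasse /ps_add mulrDr.
Qed.

Lemma hasse_scale n (a : F) (x : PS F) : ofPS (hasse n (ps_scale a x)) = kc a * ofPS (hasse n x).
Proof.
apply: keq => k; rewrite coef_kcM; case: k => [l|l] /=; last by rewrite mulr0.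
by rewrite /hasse /ps_scale mulrCA.
Qed.

Lemma lin_g n : lin (g n).
Proof.
split=> [x y|a x]; rewrite /g ?hasse_add ?hasse_scale.
  exact: frobD.
by rewrite exprMn kc_qm.
Qed.

Lemma vge_g n (x : PS F) : vge (g n x) 0.
Proof.
have := vge_exp (n:=qm F m) (vge_ofPS (hasse n x)).
by rewrite mul0r.
Qed.

Lemma vge_g_tail n N (x : PS F) : vge (g n (tail N x)) (N%:Z - n%:Z).
Proof.
case: (leqP n N) => hnN.
  have h1 : vge (ofPS (hasse n (tail N x))) (N%:Z - n%:Z).
    move=> k hk; case: k hk => [l|l] hk //=.
    rewrite /hasse /tail.
    have -> : (l + n < N)%N by move: hk; clear; lia.
    by rewrite mulr0.
  apply: vge_le (vge_exp (n:=qm F m) h1) _.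
  have := qm_gt0 F m; move: hnN; clear; nia.
apply: vge_le (vge_g n _) _; move: hnN; clear; lia.
Qed.

Lemma g_psX n j : g n (psX F j) =
  if (n <= j)%N then kc ('C(j, n))%:R * t ^+ (j - n) else 0.
Proof.
rewrite /g hasse_psX; case: ifP => _.
  by rewrite exprMn kc_qm -exprM mulnC exprM.
by rewrite expr0n; case: (qm F m) (qm_gt0 F m).
Qed.

Lemma sum_g_psX (c : nat -> K) N j : (j < N)%N ->
  \sum_(n < N) c n * g n (psX F j) =
  \sum_(n < j.+1) c n * (kc ('C(j, n))%:R * t ^+ (j - n)).
Proof.
move=> hj.
rewrite (big_ord_widen N (fun n => c n * (kc ('C(j, n))%:R * t ^+ (j - n)))) //.
rewrite [RHS]big_mkcond; apply: eq_bigr => n _; rewrite g_psX ltnS.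
by case: ifP => //; rewrite mulr0.
Qed.

Lemma sum_beta_g N j : (j < N)%N ->
  \sum_(n < N) beta n * g n (psX F j) = f (psX F j).
Proof.
move=> hj; rewrite sum_g_psX // f_expand; apply: eq_bigr => n _.
by rewrite kc_nat mulrCA mulrC mulr_natr [t ^+ _ * _]mulrC.
Qed.


Lemma coefD (x y : K) k : coef (x + y) k = coef x k + coef y k.
Proof. by []. Qed.
Lemma coefN (x : K) k : coef (- x) k = - coef x k.
Proof. by []. Qed.

Lemma fin_bound (b : nat -> K) N : exists L, forall n, (n < N)%N -> vge (b n) L.
Proof.
elim: N => [|N [L HL]]; first by exists 0.
exists (Num.min L (lb (b N))) => n; rewrite ltnS leq_eqVlt; case/orP => [/eqP->|hn].
  by apply: vge_le (@vge_lb _ (b N)) _; clear; lia.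
by apply: vge_le (HL n hn) _; clear; lia.
Qed.

Lemma tends_bound (b : nat -> K) :
  (forall M, exists N, forall n, (N <= n)%N -> vge (b n) M) -> exists L, forall n, vge (b n) L.
Proof.
move=> H; have [N HN] := H 0; have [L HL] := fin_bound b N.
exists (Num.min L 0) => n; case: (ltnP n N) => h.
  by apply: vge_le (HL n h) _; clear; lia.
by apply: vge_le (HN n h) _; clear; lia.
Qed.

Lemma f_small : Tcontinuous f -> Flinear f ->
  forall M, exists N, forall i, (N <= i)%N -> vge (f (psX F i)) M.
Proof.
move=> hc hl M; have [N HN] := hc (fun _ => 0) M; exists N => i hi k hk.
rewrite (HN (psX F i)) ?(lin_zero (lin_f hl)) // => l hl'.
rewrite /psX; have -> : (l == i) = false by move: hl' hi; clear; lia.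
by [].
Qed.

Lemma beta_tends : Tcontinuous f -> Flinear f ->
  forall M, exists N, forall n, (N <= n)%N -> vge (beta n) M.
Proof.
move=> hc hl M.
have [L HL] := tends_bound (f_small hc hl).
have [I HI] := f_small hc hl M.
exists (I + absz (M - L)%R)%N => n hn.
rewrite beta_expand; apply: vge_sum => i _; apply: vge_natmul.
have ht : vge (- t) 1.
  apply: vge_opp; apply: vge_le ((@vge_kTX F (qm F m))) _.
  by have := qm_gt0 F m; clear; lia.
have hp := vge_exp (n := (n - i)%N) ht.
have hin := ltn_ord i.
case: (leqP I i) => hi.
  by apply: vge_le (vge_mul hp (HI i hi)) _; move: hin; clear; lia.
apply: vge_le (vge_mul hp (HL i)) _; move: hin hi hn; clear; lia.
Qed.

Lemma expansion : Tcontinuous f -> Flinear f -> forall x : PS F,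
  kseries (fun n => kmul (beta n) (kexp (ofPS (hasse n x)) (qm F m))) (f x).
Proof.
move=> hc hl x M.
have [Lb HLb] := tends_bound (beta_tends hc hl).
have [n0 Hn0] := beta_tends hc hl M.
have [Nc HNc] := hc x M.
pose N' := maxn Nc (n0 + absz (M - Lb)%R).
have hN1 : (Nc <= N')%N := leq_maxl _ _.
have hN2 : (n0 + absz (M - Lb)%R <= N')%N := leq_maxr _ _.
exists N' => N hN.
have E : kpartial (fun n => kmul (beta n) (kexp (ofPS (hasse n x)) (qm F m))) N
    = \sum_(n < N) beta n * g n x.
  by rewrite /kpartial big_kaddE; apply: eq_bigr => n _; rewrite kmulE kexpE.
rewrite kaddE koppE E.
rewrite (eq_bigr (fun n : 'I_N => beta n * g n (trunc N' x) + beta n * g n (tail N' x))); last first.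
  by move=> n _; rewrite {1}(split_x N' x) (proj1 (lin_g n)) mulrDr.
rewrite big_split /=.
have E2 : \sum_(n < N) beta n * g n (trunc N' x) = f (trunc N' x).
  rewrite (lin_trunc _ _ (lin_f hl)).
  rewrite (eq_bigr (fun n : 'I_N => \sum_(j < N') kc (x j) * (beta n * g n (psX F j)))); last first.
    by move=> n _; rewrite (lin_trunc _ _ (lin_g n)) mulr_sumr; apply: eq_bigr => j _; rewrite mulrCA.
  rewrite exchange_big /=; apply: eq_bigr => j _.
  by rewrite -mulr_sumr sum_beta_g // (leq_trans (ltn_ord j)).
have V : vge (\sum_(n < N) beta n * g n (tail N' x)) M.
  apply: vge_sum => n _.
  have [hn|hn] := ltnP n n0.
    apply: vge_le (vge_mul (HLb n) (@vge_g_tail n N' x)) _.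
    by move: hn hN2; clear; lia.
  by apply: vge_le (vge_mul (Hn0 n hn) (vge_g n _)) _; clear; lia.
move=> k hk; rewrite E2 (HNc (trunc N' x)) //; last first.
  by move=> i hi; rewrite /trunc (leq_trans hi hN1).
by rewrite V // addr0 subrr.
Qed.

Lemma series_const (s : nat -> K) l c J :
  (forall N, (J <= N)%N -> kpartial s N = c) -> kseries s l -> l = c.
Proof.
move=> Hc Hs; apply: keq => k; have [N0 HN0] := Hs (k + 1).
have := HN0 (maxn N0 J) (leq_maxl _ _) k (ltr_pwDr ltr01 (lexx k)).
rewrite coef_kadd coef_kopp Hc ?leq_maxr // => /eqP; rewrite subr_eq0 => /eqP ->.
by [].
Qed.

Lemma uniq_coef (gamma : nat -> K) :
  (forall x : PS F,
     kseries (fun n => kmul (gamma n) (kexp (ofPS (hasse n x)) (qm F m))) (f x)) ->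
  gamma = beta.
Proof.
move=> H.
have key : forall c : nat -> K,
  (forall x : PS F, kseries (fun n => kmul (c n) (kexp (ofPS (hasse n x)) (qm F m))) (f x)) ->
  forall j, f (psX F j) = \sum_(n < j.+1) c n * (kc ('C(j, n))%:R * t ^+ (j - n)).
  move=> c Hc j; apply: (series_const (J := j.+1) _ (Hc (psX F j))) => N hN.
  rewrite /kpartial big_kaddE -(sum_g_psX c hN).
  by apply: eq_bigr => n _; rewrite kmulE kexpE.
have Hb : forall j, f (psX F j) = \sum_(n < j.+1) beta n * (kc ('C(j, n))%:R * t ^+ (j - n)).
  by move=> j; rewrite -(sum_g_psX beta (ltnSn j)) sum_beta_g.
apply: funext => n; elim/ltn_ind: n => j IH.
have := key gamma H j; rewrite Hb big_ord_recr [X in _ = X -> _]big_ord_recr /=.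
have ES : \sum_(i < j) beta (widen_ord (leqnSn j) i) * (kc ('C(j, widen_ord (leqnSn j) i))%:R * t ^+ (j - widen_ord (leqnSn j) i))
        = \sum_(i < j) gamma (widen_ord (leqnSn j) i) * (kc ('C(j, widen_ord (leqnSn j) i))%:R * t ^+ (j - widen_ord (leqnSn j) i)).
  by apply: eq_bigr => i _; rewrite (IH _ (ltn_ord i)).
rewrite ES => /addrI.
by rewrite binn subnn expr0 kc_nat mulr1 !mulr1 => ->.
Qed.

End Main.

Theorem theorem12 (F : finFieldType) (m : nat) (f : PS F -> laurent F) :
  LC f ->
  let beta : nat -> laurent F := fun n => iter n (@DeltaMinus F m) f (psX F 0) in
  let qm := (#|F| ^ m)%N in
  ktends0 beta /\
  (forall x : PS F,
     kseries (fun n => kmul (beta n) (kexp (ofPS (hasse n x)) qm)) (f x)) /\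
  (forall gamma : nat -> laurent F, ktends0 gamma ->
     (forall x : PS F,
        kseries (fun n => kmul (gamma n) (kexp (ofPS (hasse n x)) qm)) (f x)) ->
     gamma = beta) /\
  (forall n : nat,
     beta n =
     \big[@kadd F/kzero F]_(i < n.+1) \big[@kadd F/kzero F]_(i <= j < n.+1)
        kscale ((-1) ^+ (n - i) * ('C(n, j))%:R)
          (kmul (kexp (bracket F m) (n - j))
                (kmul (f (psX F i)) (ofPS (hasse i (psX F j)))))).
Proof.
move=> [hl hc] beta qm0.
split; first exact: (@beta_tends F m f hc hl).
split; first exact: (@expansion F m f hc hl).
split; first by move=> gamma _ H; exact: (@uniq_coef F m f gamma H).
move=> n; exact: (@beta_formula F m f n).
Qed.
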